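(* Every threshold tolerance graph is a pairwise compatibility graph.
   Context: All graphs are finite and simple. A graph $G=(V,E)$ is a threshold tolerance graph if there exist functions $g,t:V\to\mathbb{R}^+$ (positive reals) such that for all distinct $x,y\in V$, $\{x,y\}\in E$ if and only if $g(x)+g(y)\ge\min(t(x),t(y))$. A graph $G=(V,E)$ is a pairwise compatibility graph (PCG) if there exist a tree $T$ with non-negative real edge weights, whose set of leaves is exactly $V$, and two non-negative real numbers $d_{min}\le d_{max}$ such that for all distinct $u,v\in V$, $(u,v)\in E$ if and only if $d_{min}\le d_T(u,v)\le d_{max}$, where $d_T(u,v)$ is the sum of the weights of the edges on the unique path from $u$ to $v$ in $T$. *)

(* Defs.v *)
From HB Require Import structures.
From mathcomp Require Import all_boot all_order all_algebra.
From mathcomp Require Import reals.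
Set Implicit Arguments. Unset Strict Implicit. Unset Printing Implicit Defensive.
Import Order.TTheory GRing.Theory Num.Theory.
Local Open Scope ring_scope.

Definition simple_graph (V : finType) (E : rel V) : Prop :=
  symmetric E /\ irreflexive E.

Definition threshold_tolerance (R : realType) (V : finType) (E : rel V) : Prop :=
  exists g t : V -> R,
    (forall x, 0 < g x) /\ (forall x, 0 < t x) /\
    forall x y, x != y -> (E x y <-> Num.min (t x) (t y) <= g x + g y).

Definition simple_path (N : finType) (adj : rel N) (a b : N) (p : seq N) : bool :=
  [&& path adj a p, last a p == b & uniq (a :: p)].

Definition is_tree (N : finType) (adj : rel N) : Prop :=
  simple_graph adj /\
  (forall a b : N, exists p, simple_path adj a b p) /\
  (forall (a b : N) p q, simple_path adj a b p -> simple_path adj a b q -> p = q).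

(* Leaves: vertices of degree at most 1 (degree 0 only occurs for the
   one-vertex tree). *)
Definition leaf (N : finType) (adj : rel N) (n : N) : bool :=
  (#|[set m | adj n m]| <= 1)%N.

Definition path_weight (R : realType) (N : finType) (w : N -> N -> R)
    (a : N) (p : seq N) : R :=
  \sum_(x <- pairmap w a p) x.

Definition tree_dist (R : realType) (N : finType) (adj : rel N)
    (w : N -> N -> R) (a b : N) (d : R) : Prop :=
  exists p, simple_path adj a b p /\ d = path_weight w a p.

Definition pcg (R : realType) (V : finType) (E : rel V) : Prop :=
  exists (N : finType) (adj : rel N) (w : N -> N -> R) (f : V -> N)
         (dmin dmax : R),
    is_tree adj /\
    (forall a b, w a b = w b a) /\ (forall a b, 0 <= w a b) /\
    injective f /\ (forall n, leaf adj n <-> exists x, f x = n) /\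
    0 <= dmin /\ dmin <= dmax /\
    forall u v, u != v ->
      (E u v <-> exists d, tree_dist adj w (f u) (f v) d /\ dmin <= d <= dmax).

(* Main.v *)
Require Import Defs.
From mathcomp Require Import all_boot all_order all_algebra.
From mathcomp Require Import reals.
From mathcomp Require Import lra.
Set Implicit Arguments. Unset Strict Implicit. Unset Printing Implicit Defensive.
Import Order.TTheory GRing.Theory Num.Theory.

Definition padj (N : finType) (root : N) (par : N -> N) : rel N :=
  fun u v => ((u != root) && (par u == v)) || ((v != root) && (par v == u)).

Definition anc (N : finType) (par : N -> N) (u c : N) : Prop :=
  exists k, iter k par u = c.

Lemma anc_par (N : finType) (par : N -> N) (u c : N) :
  u != c -> (anc par u c <-> anc par (par u) c).
Proof.
move=> uc; split.
- case=> [[|k]]; first by move=> /= e; rewrite e eqxx in uc.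
  by rewrite iterSr => e; exists k.
- by case=> k e; exists k.+1; rewrite iterSr.
Qed.

Lemma anc_step (N : finType) root (par : N -> N) u v c :
  padj root par u v -> u != par c -> v != par c ->
  (anc par u c <-> anc par v c).
Proof.
move=> /orP[/andP[_ /eqP e]|/andP[_ /eqP e]] hu hv.
- have uc : u != c by apply: contraNneq hv => ucE; rewrite -e ucE.
  by rewrite -e; apply: anc_par.
- have vc : v != c by apply: contraNneq hu => vcE; rewrite -e vcE.
  by rewrite -e; symmetry; apply: anc_par.
Qed.

Lemma anc_last (N : finType) root (par : N -> N) c x p :
  path (padj root par) x p -> par c \notin x :: p ->
  (anc par (last x p) c <-> anc par x c).
Proof.
elim: p x => [|y p IH] x //= /andP[hxy hp].
rewrite inE negb_or => /andP[hx hyp].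
have hy : par c != y by move: hyp; rewrite inE negb_or => /andP[].
rewrite IH //; symmetry; apply: (anc_step hxy); by rewrite eq_sym.
Qed.

Section Gen.
Variables (N : finType) (root : N) (par : N -> N) (h : N -> nat).
Hypothesis Hr : par root = root.
Hypothesis Hh : forall u, u != root -> h (par u) < h u.

Lemma h_par u : h (par u) <= h u.
Proof. by case: (eqVneq u root) => [->|/Hh/ltnW //]; rewrite Hr. Qed.

Lemma h_iter k u : h (iter k par u) <= h u.
Proof. elim: k => //= k IH; exact: leq_trans (h_par _) IH. Qed.

Lemma iter_sib l x y : iter l par x = y -> par x = par y -> y != root -> x != y -> False.
Proof.
case: l => [/= ->|l]; first by rewrite eqxx.
rewrite iterSr => e pxy yr _.
have := h_iter l (par x); rewrite e pxy => H.
by have := Hh yr; rewrite ltnNge H.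
Qed.

Let adj := padj root par.

Lemma no_fork_A a x y p q :
  par a = x -> y != root -> par y = a ->
  path adj x p -> path adj y q -> a \notin x :: p -> a \notin y :: q ->
  last x p = last y q -> False.
Proof.
move=> ex yr ey hp hq ap aq el.
have h1 : anc par (last y q) y.
  by apply/(@anc_last N root par y y q hq); rewrite ?ey //; exists 0.
have : anc par x y.
  by apply/(@anc_last N root par y x p hp); rewrite ?ey // el.
case=> k e.
have := h_iter k x; rewrite e -ex => H.
have := leq_trans H (h_par a); have := Hh yr; rewrite ey.
by move=> H1 H2; move: (leq_ltn_trans H2 H1); rewrite ltnn.
Qed.

Lemma no_fork a x y p q : x != y -> adj a x -> adj a y ->
  path adj x p -> path adj y q -> a \notin x :: p -> a \notin y :: q ->
  last x p = last y q -> False.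
Proof.
move=> nxy /orP[/andP[ar /eqP ex]|/andP[xr /eqP ex]]
          /orP[/andP[_ /eqP ey]|/andP[yr /eqP ey]] hp hq ap aq el.
- by rewrite -ex -ey eqxx in nxy.
- exact: (no_fork_A ex yr ey hp hq ap aq el).
- exact: (no_fork_A ey xr ex hq hp aq ap (esym el)).
have h1 : anc par (last y q) y.
  by apply/(@anc_last N root par y y q hq); rewrite ?ey //; exists 0.
have h2 : anc par (last x p) x.
  by apply/(@anc_last N root par x x p hp); rewrite ?ex //; exists 0.
rewrite -el in h1; case: h1 => m em; case: h2 => k ek.
case: (leqP k m) => km.
- have : iter (m - k) par x = y by rewrite -ek -iterD subnK.
  move=> /iter_sib; apply => //; by rewrite ex ey.
- have : iter (k - m) par y = x by rewrite -em -iterD subnK // ltnW.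
  move=> /iter_sib; apply => //; by rewrite ?ex ?ey // eq_sym.
Qed.

Lemma padj_tree : is_tree adj.
Proof.
have irr : irreflexive adj.
  move=> u; rewrite /adj /padj orbb; apply/negP => /andP[ur /eqP e].
  by have := Hh ur; rewrite e ltnn.
have sym : symmetric adj by move=> u v; rewrite /adj /padj orbC.
split; first by [].
split.
- have up : forall u, connect adj u root.
    move=> u; elim: {u}(h u) {-2}u (leqnn (h u)) => [|k IH] u hu.
      case: (eqVneq u root) => [->|ur]; first exact: connect0.
      by have := Hh ur; rewrite ltnNge (leq_trans hu (leq0n _)).
    case: (eqVneq u root) => [->|ur]; first exact: connect0.
    apply: (connect_trans (y := par u)); last by apply: IH; rewrite -ltnS (leq_trans (Hh ur)).
    by apply: connect1; rewrite /adj /padj ur eqxx.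
  move=> a b.
  have : connect adj a b.
    apply: connect_trans (up a) _; rewrite (sym_connect_sym sym); exact: up.
  case/connectP => p hp ->.
  case: (shortenP hp) => p' hp' hu _; exists p'.
  by rewrite /simple_path hp' hu eqxx.
- move=> a b p; elim: p a => [|x p IH] a [|y q] /andP[hp /andP[/eqP hl hu]] /andP[hq /andP[/eqP hl' hu']] //.
  + exfalso; move: hu' => /= /andP[/negP H _]; apply: H.
    by have := mem_last y q; move: hl' hl => /= -> ->.
  + exfalso; move: hu => /= /andP[/negP H _]; apply: H.
    by have := mem_last x p; move: hl' hl => /= -> ->.
  + move: hp hq hl hl' => /= /andP[hax hp] /andP[hay hq] hl hl'.
    case: (eqVneq x y) => [exy|nxy].
    * rewrite exy; congr (_ :: _); apply: (IH y); rewrite /simple_path.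
      -- by rewrite -exy hp hl eqxx; move: hu => /= /andP[_ ->].
      -- by rewrite hq hl' eqxx; move: hu' => /= /andP[_ ->].
    * exfalso; apply: (no_fork nxy hax hay hp hq).
      -- by move: hu => /= /andP[].
      -- by move: hu' => /= /andP[].
      -- by rewrite hl hl'.

Qed.
End Gen.
Local Open Scope ring_scope.

Section PW.
Variables (R : realType) (N : finType) (w : N -> N -> R).

Lemma pw_nil a : path_weight w a [::] = 0.
Proof. by rewrite /path_weight big_nil. Qed.

Lemma pw_cons a x p : path_weight w a (x :: p) = w a x + path_weight w x p.
Proof. by rewrite /path_weight /= big_cons. Qed.

Lemma pw_cat a p q : path_weight w a (p ++ q) = path_weight w a p + path_weight w (last a p) q.
Proof.
elim: p a => [|x p IH] a /=; first by rewrite pw_nil add0r.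
by rewrite !pw_cons IH addrA.
Qed.

Lemma pw_rcons a p z : path_weight w a (rcons p z) = path_weight w a p + w (last a p) z.
Proof. by rewrite -cats1 pw_cat pw_cons pw_nil addr0. Qed.

Hypothesis wsym : forall a b, w a b = w b a.

Lemma last_rev_belast (x : N) p : last (last x p) (rev (belast x p)) = x.
Proof. by case: p => [|y p] //=; rewrite rev_cons last_rcons. Qed.

Lemma pw_rev a p : path_weight w (last a p) (rev (belast a p)) = path_weight w a p.
Proof.
elim: p a => [|x p IH] a /=; first by [].
rewrite rev_cons pw_rcons IH last_rev_belast pw_cons wsym addrC //.
Qed.
End PW.

Lemma simple_rev (N : finType) (adj : rel N) a b p : symmetric adj ->
  simple_path adj a b p -> simple_path adj b a (rev (belast a p)).
Proof.
move=> sym /and3P[hp /eqP hl hu]; rewrite /simple_path -hl.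
rewrite rev_path last_rev_belast eqxx andTb.
have -> : uniq (last a p :: rev (belast a p)) = uniq (a :: p).
  by rewrite -rev_rcons -lastI rev_uniq.
rewrite hu andbT.
by apply: sub_path hp => x y; rewrite sym.
Qed.

Lemma tree_dist_sym (R : realType) (N : finType) (adj : rel N) (w : N -> N -> R) a b d :
  symmetric adj -> (forall a b, w a b = w b a) ->
  tree_dist adj w a b d -> tree_dist adj w b a d.
Proof.
move=> sym wsym [p [hp ->]]; exists (rev (belast a p)); split.
  exact: simple_rev.
by move: hp => /and3P[_ /eqP <- _]; rewrite pw_rev.
Qed.

Lemma pcg_small (R : realType) (V : finType) (E : rel V) : (#|V| <= 1)%N -> pcg R E.
Proof.
move=> H.
have eqV : forall a b : V, a = b.
  by move=> a b; apply: (card_le1_eqP H).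
exists V, [rel _ _ | false], (fun _ _ => 0 : R), id, 0, 0.
split.
  split; first by split.
  split.
    by move=> a b; exists [::]; rewrite /simple_path /= (eqV a b) eqxx.
  by move=> a b [|x p] [|y q] //= /andP[].
split; first by [].
split; first by [].
split; first by [].
split.
  move=> n; split; last by rewrite /leaf (leq_trans (max_card _) H).
  by move=> _; exists n.
split; first by [].
split; first by [].
by move=> u v; rewrite (eqV u v) eqxx.
Qed.

Lemma pcg_transfer (R : realType) (V W : finType) (E : rel V) (F : rel W)
   (r : V -> W) (s : W -> V) : cancel r s -> cancel s r ->
   (forall u v, u != v -> (E u v <-> F (r u) (r v))) -> pcg R F -> pcg R E.
Proof.
move=> rs sr EF [N [adj [w [f [dmin [dmax [Ht [Hs [Hw [Hi [Hl [H0 [Hd Hc]]]]]]]]]]]]].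
exists N, adj, w, (f \o r), dmin, dmax.
do 3 (split; first by []).
split.
  by apply: inj_comp Hi (can_inj rs).
split.
  move=> m; rewrite Hl; split; case=> x <-.
    by exists (s x); rewrite /= sr.
  by exists (r x).
do 2 (split; first by []).
move=> u v uv; rewrite EF //; apply: Hc.
by apply: contra uv => /eqP /(can_inj rs) ->.
Qed.

Section Cat.
Variables (n : nat) (o0 : 'I_n).
Hypothesis ho : val o0 = 0%N.

Definition croot : bool * 'I_n := (false, o0).
Definition cpar (u : bool * 'I_n) : bool * 'I_n :=
  (false, if u.1 then u.2 else insubd o0 (u.2).-1).
Definition ch (u : bool * 'I_n) : nat := if u.1 then (val u.2).+1 else val u.2.
Definition cadj := padj croot cpar.
Definition sp (k : nat) : bool * 'I_n := (false, insubd o0 k).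

Lemma val_ins k : (k < n)%N -> val (insubd o0 k) = k.
Proof. by move=> hk; rewrite val_insubd hk. Qed.

Lemma ins_val (i : 'I_n) : insubd o0 i = i.
Proof. by apply: val_inj; rewrite val_ins. Qed.

Lemma ins_pred (i : 'I_n) : val (insubd o0 (val i).-1) = (val i).-1.
Proof. by rewrite val_ins // (leq_ltn_trans (leq_pred _) (ltn_ord i)). Qed.

Lemma cpar_root : cpar croot = croot.
Proof. rewrite /cpar /croot /=; congr (_, _); apply: val_inj; by rewrite ins_pred /= ho. Qed.

Lemma ch_dec u : u != croot -> (ch (cpar u) < ch u)%N.
Proof.
case: u => [[] i] //= hu; rewrite /ch /= ins_pred.
have : val i != 0%N.
  apply: contra hu => /eqP e; apply/eqP; congr (_, _); apply: val_inj; by rewrite e ho.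
by case: i {hu} => [[|m] ?].
Qed.

Lemma ctree : is_tree cadj.
Proof. exact: (padj_tree cpar_root ch_dec). Qed.

Lemma csym : symmetric cadj.
Proof. by move=> u v; rewrite /cadj /padj orbC. Qed.

Lemma adj_sp k : (k.+1 < n)%N -> cadj (sp k) (sp k.+1).
Proof.
move=> hk; apply/orP; right; apply/andP; split.
  rewrite /sp /croot; apply/eqP => [[]] /(congr1 val); rewrite val_ins // ho //.
rewrite /cpar /sp /=; apply/eqP; congr (_, _); apply: val_inj.
by rewrite ins_pred !val_ins // ltnW.
Qed.

Lemma path_sp i k : (i + k < n)%N -> path cadj (sp i) (map sp (iota i.+1 k)).
Proof.
elim: k i => [|k IH] i hk //=.
rewrite adj_sp ?IH //; first by rewrite addSnnS.
by rewrite (leq_ltn_trans _ hk) // -addn1 leq_add2l.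
Qed.

Lemma last_sp i k : last (sp i) (map sp (iota i.+1 k)) = sp (i + k)%N.
Proof. by elim: k i => [|k IH] i /=; rewrite ?addn0 // IH addSnnS. Qed.

Lemma uniq_sp i k : (i + k < n)%N -> uniq (map sp (iota i k.+1)).
Proof.
move=> hk; rewrite map_inj_in_uniq ?iota_uniq //.
move=> a b; rewrite !mem_iota => /andP[_ ha] /andP[_ hb] [] /(congr1 val).
by rewrite !val_ins // (leq_trans _ hk) // -addnS.
Qed.

Lemma notin_true b (x : 'I_n) s : (b, x) \in map sp s = (b == false) && ((b, x) \in map sp s).
Proof. by case: b => //=; apply/mapP => [[k _]]. Qed.

Variables (R : realType) (G T : 'I_n -> R).
Hypothesis Gpos : forall i, 0 < G i.
Hypothesis Tpos : forall i, 0 < T i.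
Hypothesis Tmono : forall i j : 'I_n, (i <= j)%N -> T i <= T j.

Definition M := \sum_i T i.
Definition SG := \sum_i G i.
Definition phi (u : bool * 'I_n) : R := if u.1 then 2 * G u.2 + M else T u.2.
Definition cw (u v : bool * 'I_n) : R := `|phi u - phi v|.

Lemma sum_ge (F : 'I_n -> R) : (forall i, 0 < F i) -> forall k, F k <= \sum_i F i.
Proof.
move=> Fp k; rewrite (bigD1 k) //= lerDl sumr_ge0 // => i _; exact: ltW.
Qed.

Lemma pw_sp i k : (i + k < n)%N ->
  path_weight cw (sp i) (map sp (iota i.+1 k)) = T (insubd o0 (i + k)%N) - T (insubd o0 i).
Proof.
elim: k i => [|k IH] i hk /=; first by rewrite pw_nil addn0 subrr.
have hi1 : (i.+1 + k < n)%N by rewrite addSnnS.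
rewrite pw_cons IH // -addSnnS /cw /phi /=.
have -> : `|T (insubd o0 i) - T (insubd o0 i.+1)| = T (insubd o0 i.+1) - T (insubd o0 i).
  rewrite distrC ger0_norm // subr_ge0; apply: Tmono.
  have hi : (i <= i.+1 + k)%N by rewrite (leq_trans (leqnSn i)) // leq_addr.
  by rewrite !val_ins // (leq_ltn_trans _ hi1) // ltnS leq_addr.
by rewrite addrC addrA subrK.
Qed.

Definition D (i j : 'I_n) : R := 2 * G i + 2 * G j + 2 * M - 2 * Num.min (T i) (T j).

Definition cP (i j : 'I_n) : seq (bool * 'I_n) :=
  map sp (iota i (j - i)%N.+1) ++ [:: (true, j)].

Lemma cP_simple (i j : 'I_n) : (i < j)%N -> simple_path cadj (true, i) (true, j) (cP i j).
Proof.
move=> ij.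
have hk : (i + (j - i) < n)%N by rewrite (subnKC (ltnW ij)).
have spi : sp i = (false, i) by rewrite /sp ins_val.
have spj : sp (i + (j - i))%N = (false, j) by rewrite (subnKC (ltnW ij)) /sp ins_val.
apply/and3P; split.
- rewrite /cP /= cat_path; apply/and3P; split.
  + rewrite spi; apply/orP; left; apply/andP; split => //.
  + exact: path_sp.
  + rewrite last_sp spj /= andbT; apply/orP; right; apply/andP; split => //.
- by rewrite /cP last_cat /=.
- have hnot : forall x s, (true, x) \notin map sp s.
    by move=> x s; apply/mapP => [[k _]].
  rewrite /cP -cat_cons cat_uniq cons_uniq hnot uniq_sp //=.
  rewrite orbF andbT !inE (negbTE (hnot _ _)) orbF /sp !xpair_eqE /= orbF.
  by rewrite -val_eqE /= neq_ltn ij orbT.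
Qed.
Lemma cP_weight (i j : 'I_n) : (i < j)%N -> path_weight cw (true, i) (cP i j) = D i j.
Proof.
move=> ij.
have hk : (i + (j - i) < n)%N by rewrite (subnKC (ltnW ij)).
have spi : sp i = (false, i) by rewrite /sp ins_val.
have spj : sp (i + (j - i))%N = (false, j) by rewrite (subnKC (ltnW ij)) // /sp ins_val.
rewrite /cP /= pw_cons pw_cat pw_sp // last_sp spj pw_cons pw_nil addr0.
rewrite (subnKC (ltnW ij)) // !ins_val spi /cw /phi /=.
have hM : forall k, T k <= M by apply: sum_ge.
have Tij : T i <= T j by apply: Tmono; exact: ltnW.
rewrite /D (min_l Tij).
have h1 : 0 <= 2 * G i + M - T i.
  by rewrite subr_ge0 (le_trans (hM i)) // lerDr mulr_ge0 // ltW.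
have h2 : 0 <= 2 * G j + M - T j.
  by rewrite subr_ge0 (le_trans (hM j)) // lerDr mulr_ge0 // ltW.
rewrite (ger0_norm h1) distrC (ger0_norm h2).
lra.
Qed.
End Cat.

Lemma pcg_cat (R : realType) (n : nat) (hn : (1 < n)%N) (G T : 'I_n -> R) :
  (forall i, 0 < G i) -> (forall i, 0 < T i) ->
  (forall i j : 'I_n, (i <= j)%N -> T i <= T j) ->
  pcg R [rel i j : 'I_n | Num.min (T i) (T j) <= G i + G j].
Proof.
move=> Gpos Tpos Tmono.
pose o0 : 'I_n := Ordinal (ltnW hn).
have ho : val o0 = 0%N by [].
have Htree := ctree ho.
have Hu := Htree.2.2.
have dist_lt : forall (i j : 'I_n) d, (i < j)%N ->
    (tree_dist (cadj o0) (cw G T) (true, i) (true, j) d <-> d = D G T i j).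
  move=> i j d ij; split.
    case=> p [hp ->]; rewrite (Hu _ _ _ _ hp (cP_simple ho ij)).
    exact: cP_weight.
  move=> ->; exists (cP o0 i j); split; first exact: cP_simple.
  by rewrite cP_weight.
have wsym : forall a b, cw G T a b = cw G T b a by move=> a b; rewrite /cw distrC.
have csym := csym o0.
have dist : forall (i j : 'I_n) d, i != j ->
    (tree_dist (cadj o0) (cw G T) (true, i) (true, j) d <-> d = D G T i j).
  move=> i j d; rewrite neq_ltn => /orP[ij|ji]; first exact: dist_lt.
  have -> : D G T i j = D G T j i by rewrite /D minC; lra.
  rewrite -dist_lt //; split; exact: tree_dist_sym.
exists (bool * 'I_n)%type, (cadj o0), (cw G T), (fun i => (true, i)),
  (2 * M T), (2 * M T + 4 * SG G).
split; first exact: Htree.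
split; first exact: wsym.
split; first by move=> a b; rewrite /cw normr_ge0.
split; first by move=> a b [].
split.
  case=> [[] i]; split.
  - by move=> _; exists i.
  - move=> _; rewrite /leaf.
    apply: leq_trans (subset_leq_card (B := [set ((false, i) : bool * 'I_n)]) _) _; last by rewrite cards1.
    apply/subsetP => z; rewrite !inE /cadj /padj /cpar /= !xpair_eqE /=.
    by rewrite andbF orbF eq_sym.
  - rewrite /leaf => hl; exfalso.
    have ha : ((true, i) : bool * 'I_n) \in [set m | cadj o0 (false, i) m].
      by rewrite inE /cadj /padj /cpar /= eqxx orbT.
    have [b [hb hab]] : exists b, b \in [set m | cadj o0 (false, i) m] /\ (true, i) != b.
      case: (eqVneq (val i) 0%N) => [i0|i0].
        exists (sp o0 1); split; last by [].
        have -> : ((false, i) : bool * 'I_n) = sp o0 0.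
          by rewrite /sp; congr (_, _); apply: val_inj; rewrite val_ins // ?i0 // ltnW.
        by rewrite inE adj_sp.
      exists (cpar o0 (false, i)); split; last by [].
      rewrite inE /cadj /padj eqxx andbT; apply/orP; left.
      by rewrite /croot xpair_eqE /= -val_eqE /=.
    have : (#|[set ((true, i) : bool * 'I_n); b]| <= #|[set m | cadj o0 (false, i) m]|)%N.
      by apply: subset_leq_card; rewrite subUset !sub1set ha hb.
    by rewrite cards2 hab => /leq_trans /(_ hl).
  - by case.
have hM : 0 <= M T by rewrite /M sumr_ge0 // => i _; exact: ltW.
have hSG : 0 <= SG G by rewrite /SG sumr_ge0 // => i _; exact: ltW.
split; first by rewrite mulr_ge0.
split; first by rewrite lerDl mulr_ge0.
move=> i j ij /=; split.
  move=> hE; exists (D G T i j); split; first by apply/dist.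
  have hi := sum_ge Gpos i; have hj := sum_ge Gpos j.
  have hm : 0 < Num.min (T i) (T j) by rewrite lt_min !Tpos.
  rewrite /D /SG /M in hi hj hm hE *; apply/andP; split; lra.
case=> d [/(dist _ _ _ ij) -> /andP[h1 h2]].
by move: h1; rewrite /D; lra.
Qed.

Theorem theorem3 (R : realType) (V : finType) (E : rel V) :
  simple_graph E -> threshold_tolerance R E -> pcg R E.
Proof.
move=> _ [g [t [gpos [tpos Ht]]]].
case: (leqP #|V| 1) => hV; first exact: pcg_small.
have [x0 _] : exists x : V, x \in V by apply/card_gt0P; exact: ltnW.
pose leT := fun x y : V => t x <= t y.
pose s := sort leT (enum V).
have ssize : size s = #|V| by rewrite size_sort -cardE.
have suniq : uniq s by rewrite sort_uniq enum_uniq.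
have smem : forall x, x \in s by move=> x; rewrite mem_sort mem_enum.
have ssorted : sorted leT s by apply: sort_sorted => x y; exact: le_total.
pose o0 : 'I_#|V| := Ordinal (ltnW hV).
pose sg (i : 'I_#|V|) := nth x0 s i.
pose r (x : V) : 'I_#|V| := insubd o0 (index x s).
have rval : forall x, val (r x) = index x s.
  by move=> x; rewrite val_insubd (_ : index x s < #|V|)%N // -ssize index_mem smem.
have rs : cancel r sg by move=> x; rewrite /sg rval nth_index.
have sr : cancel sg r.
  by move=> i; apply: val_inj; rewrite rval /sg index_uniq // ssize.
apply: (pcg_transfer (F := [rel i j : 'I_#|V| |
     Num.min (t (sg i)) (t (sg j)) <= g (sg i) + g (sg j)]) rs sr).
  by move=> u v uv /=; rewrite !rs; exact: Ht.
apply: pcg_cat => //.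
move=> i j ij; apply: (sorted_leq_nth (leT := leT)) => //.
- by move=> a b c; exact: le_trans.
- by move=> a; exact: lexx.
- by rewrite inE ssize.
- by rewrite inE ssize.
Qed.
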